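(* Let $f\colon\mathbb{R}^n\to\mathbb{R}$ be convex and differentiable with $\|\nabla f(x)-\nabla f(y)\|\le L\|x-y\|$ (Euclidean norm, $L>0$), with a minimizer $x_\star$, $f_\star=f(x_\star)$. Given $x_0$, let $y_0=x_0$ and for $k=0,1,\dots$ \[ y_{k+1}=x_k-\tfrac1L\nabla f(x_k),\qquad x_{k+1}=y_{k+1}+\frac{k}{k+3}(y_{k+1}-y_k)+\frac{k+2}{k+3}(y_{k+1}-x_k). \] Then for $k=1,2,\dots$, $f(y_k)-f_\star\le\dfrac{L\|x_0-x_\star\|^2}{(k+1)^2}$.
   Context: This iteration is called Simple-OGM. *)

(* Defs.v *)
From HB Require Import structures.
From mathcomp Require Import all_boot all_order all_algebra.
From mathcomp Require Import all_classical all_reals all_analysis.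
Set Implicit Arguments. Unset Strict Implicit. Unset Printing Implicit Defensive.
Import Order.TTheory GRing.Theory Num.Theory.
Import numFieldNormedType.Exports.
Local Open Scope ring_scope.

(* Euclidean inner product and norm on R^n (the library norm on matrices is the sup norm). *)
Definition dotv {R : realType} {n : nat} (u v : 'rV[R]_n) : R :=
  \sum_(i < n) u 0 i * v 0 i.
Definition enorm {R : realType} {n : nat} (u : 'rV[R]_n) : R :=
  Num.sqrt (dotv u u).

Definition gradient {R : realType} {n : nat} (f : 'rV[R]_n -> R) (x : 'rV[R]_n)
  : 'rV[R]_n := \row_(i < n) ('d f x (delta_mx 0 i : 'rV[R]_n)).

Definition convex_fun {R : realType} {n : nat} (f : 'rV[R]_n -> R) : Prop :=
  forall (x y : 'rV[R]_n) (t : R), 0 <= t -> t <= 1 ->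
    f ((1 - t) *: x + t *: y) <= (1 - t) * f x + t * f y.

(* Main.v *)
Require Import Defs.
From HB Require Import structures.
From mathcomp Require Import all_boot all_order all_algebra.
From mathcomp Require Import all_classical all_reals all_analysis.
From mathcomp Require Import ring lra.
Import Order.TTheory GRing.Theory Num.Theory.
Import numFieldNormedType.Exports.
Local Open Scope classical_set_scope.
Local Open Scope ring_scope.

Ltac dotv_tac := rewrite /dotv ?mulr_sumr ?mulr_suml; do 5 rewrite -?big_split -?sumrN /=;
  apply: eq_bigr => i _; rewrite ?mxE; ring.

Section S.
Lemma dotvDl {R : realType} {n : nat} (u w v : 'rV[R]_n) : dotv (u + w) v = dotv u v + dotv w v.
Proof. dotv_tac. Qed.
Lemma dotvDr {R : realType} {n : nat} (u w v : 'rV[R]_n) : dotv v (u + w) = dotv v u + dotv v w.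
Proof. dotv_tac. Qed.
Lemma dotvNl {R : realType} {n : nat} (u v : 'rV[R]_n) : dotv (- u) v = - dotv u v.
Proof. dotv_tac. Qed.
Lemma dotvNr {R : realType} {n : nat} (u v : 'rV[R]_n) : dotv v (- u) = - dotv v u.
Proof. dotv_tac. Qed.
Lemma dotvZl {R : realType} {n : nat} (c : R) (u v : 'rV[R]_n) : dotv (c *: u) v = c * dotv u v.
Proof. dotv_tac. Qed.
Lemma dotvZr {R : realType} {n : nat} (c : R) (u v : 'rV[R]_n) : dotv v (c *: u) = c * dotv v u.
Proof. dotv_tac. Qed.
Lemma dotvC {R : realType} {n : nat} (u v : 'rV[R]_n) : dotv u v = dotv v u.
Proof. dotv_tac. Qed.
End S.
Lemma diff_dotv {R : realType} {n : nat} (f : 'rV[R]_n -> R) (x v : 'rV[R]_n) :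
  'd f x v = dotv (gradient f x) v.
Proof.
rewrite {1}(row_sum_delta v) linear_sum /dotv; apply: eq_bigr => i _.
by rewrite linearZ /= /gradient mxE mulrC.
Qed.
Lemma dotvv_ge0 {R : realType} {n : nat} (u : 'rV[R]_n) : 0 <= dotv u u.
Proof. by rewrite /dotv; apply: sumr_ge0 => i _; rewrite -expr2 sqr_ge0. Qed.

Lemma enorm_sq {R : realType} {n : nat} (u : 'rV[R]_n) : enorm u ^+ 2 = dotv u u.
Proof. by rewrite /enorm sqr_sqrtr // dotvv_ge0. Qed.

Lemma dotvv_eq0 {R : realType} {n : nat} (u : 'rV[R]_n) : dotv u u = 0 -> u = 0.
Proof.
rewrite /dotv => /eqP; rewrite psumr_eq0 => [/allP H|i _]; last by rewrite -expr2 sqr_ge0.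
apply/rowP => j; rewrite mxE; have := H j (mem_index_enum j).
by rewrite implyTb mulf_eq0 orbb => /eqP.
Qed.


Lemma cs {R : realType} {n : nat} (u v : 'rV[R]_n) : dotv u v <= enorm u * enorm v.
Proof.
have [a0|a0] := eqVneq (enorm u) 0.
  have : dotv u u = 0 by rewrite -enorm_sq a0 expr0n.
  by move/dotvv_eq0 => ->; rewrite /dotv big1 ?mulr_ge0 ?sqrtr_ge0 // => i _; rewrite mxE mul0r.
have [b0|b0] := eqVneq (enorm v) 0.
  have : dotv v v = 0 by rewrite -enorm_sq b0 expr0n.
  by move/dotvv_eq0 => ->; rewrite /dotv big1 ?mulr_ge0 ?sqrtr_ge0 // => i _; rewrite mxE mulr0.
have ha : 0 < enorm u by rewrite lt_def a0 sqrtr_ge0.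
have hb : 0 < enorm v by rewrite lt_def b0 sqrtr_ge0.
have := dotvv_ge0 (enorm v *: u - enorm u *: v).
have -> : dotv (enorm v *: u - enorm u *: v) (enorm v *: u - enorm u *: v) =
  enorm v ^+ 2 * dotv u u - 2 * enorm u * enorm v * dotv u v + enorm u ^+ 2 * dotv v v.
  dotv_tac.
rewrite -!enorm_sq => H.
have hab : 0 < enorm u * enorm v by rewrite mulr_gt0.
nra.
Qed.

Lemma line_derive {R : realType} {n : nat} (f : 'rV[R]_n -> R) (a v : 'rV[R]_n) (t : R) :
  differentiable f (a + t *: v) ->
  is_derive t 1 (fun s : R => f (a + s *: v)) ('d f (a + t *: v) v).
Proof.
move=> df.
have E : (fun h : R => h^-1 *: (((fun s : R => f (a + s *: v)) \o shift t) (h *: 1) - f (a + t *: v)))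
   = (fun h : R => h^-1 *: ((f \o shift (a + t *: v)) (h *: v) - f (a + t *: v))).
  apply: funext => h /=; congr (_ *: (f _ - _)).
  by rewrite /shift /= [h *: 1]mulr1 scalerDl addrCA addrA.
have dv : derivable f (a + t *: v) v by exact: diff_derivable.
apply: DeriveDef; first by rewrite /derivable E.
by rewrite /derive E -/(derive f (a + t *: v) v) deriveE.
Qed.

Lemma enormZ {R : realType} {n : nat} (c : R) (v : 'rV[R]_n) : enorm (c *: v) = `|c| * enorm v.
Proof.
rewrite /enorm (_ : dotv (c *: v) (c *: v) = c ^+ 2 * dotv v v); last first.
  by rewrite dotvZl dotvZr mulrA expr2.
by rewrite sqrtrM ?sqr_ge0 // sqrtr_sqr.
Qed.

Lemma descent {R : realType} {n : nat} (f : 'rV[R]_n -> R) (G : 'rV[R]_n -> 'rV[R]_n) (L : R) (a w : 'rV[R]_n) :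
  (forall z, differentiable f z) -> (forall z u, 'd f z u = dotv (G z) u) -> 0 < L ->
  (forall u v : 'rV[R]_n, enorm (G u - G v) <= L * enorm (u - v)) ->
  f w <= f a + dotv (G a) (w - a) + L / 2 * dotv (w - a) (w - a).
Proof.
move=> df dG L0 Lip.
set v := w - a; set c1 := dotv (G a) v; set c2 := L / 2 * dotv v v.
pose phi := fun s : R => f (a + s *: v).
pose k := phi - (c1 \*: id + c2 \*: (id * id)).
pose dk := fun s : R => 'd f (a + s *: v) v - (c1 * 1 + c2 * (s * 1 + s * 1)).
have kd : forall s : R, is_derive s 1 k (dk s).
  move=> s; have H := line_derive f a v s (df _).
  eapply is_derive_eq.
    refine (is_deriveB H (is_deriveD (is_deriveZ c1 (@is_derive_id _ R^o s 1)) (is_deriveZ c2 (is_deriveM (@is_derive_id _ R^o s 1) (@is_derive_id _ R^o s 1))))).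
  by rewrite /dk /=.
have kc : {within `[0, 1], continuous k}.
  by apply: derivable_within_continuous => x _; exact: (@ex_derive _ _ _ _ _ _ (dk x) (kd x)).
have [c /andP[c0 c1le] E] := MVT_segment ler01 (fun x _ => kd x) kc.
have Hk1 : k 1 = f w - c1 - c2.
  change (f (a + 1 *: v) - (c1 * 1 + c2 * (1 * 1)) = f w - c1 - c2).
  rewrite scale1r /v addrCA subrr addr0; ring.
have Hk0 : k 0 = f a.
  change (f (a + 0 *: v) - (c1 * 0 + c2 * (0 * 0)) = f a).
  rewrite scale0r addr0; ring.
have Hdk : dk c <= 0.
  rewrite /dk dG.
  set g1 := G (a + c *: v).
  change (dotv g1 v - (c1 * 1 + c2 * (c * 1 + c * 1)) <= (0:R)).
  have e1 : dotv g1 v - (c1 * 1 + c2 * (c * 1 + c * 1)) = (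
     dotv (g1 - G a) v - c * L * dotv v v : R).
    by rewrite dotvDl dotvNl /c1 /c2; field; rewrite ?pnatr_eq0.
  rewrite e1 subr_le0.
  apply: (le_trans (cs _ _)).
  have := Lip (a + c *: v) a; rewrite [a + _ - _]addrAC subrr add0r enormZ ger0_norm // => HL.
  have := sqrtr_ge0 (dotv v v); rewrite -/(enorm v) => hv.
  rewrite -enorm_sq; apply: (le_trans (ler_wpM2r hv HL)).
  by rewrite expr2 mulrA [c * L]mulrC !mulrA.
move: E; rewrite Hk1 Hk0 subr0 mulr1 => E.
have : f w - c1 - c2 - f a <= 0 by rewrite E.
lra.
Qed.

Lemma convex_grad {R : realType} {n : nat} (f : 'rV[R]_n -> R) (G : 'rV[R]_n -> 'rV[R]_n) (b w : 'rV[R]_n) :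
  convex_fun f -> (forall z, differentiable f z) -> (forall z u, 'd f z u = dotv (G z) u) ->
  f b + dotv (G b) (w - b) <= f w.
Proof.
move=> cf df dG.
set v := w - b.
pose q := fun h : R => h^-1 *: ((f \o shift b) (h *: v) - f b).
have dv : derivable f b v by exact: diff_derivable.
have cq : q @ 0^' --> 'D_v f b by exact: dv.
have cqr : q @ 0^'+ --> 'D_v f b.
  move=> A /cq /nbhs_ballP [_ /posnumP[e] xe_A].
  by exists e%:num => //= y xe_y; rewrite lt_def => /andP [xney _]; apply: xe_A.
have : 'D_v f b <= f w - f b.
  apply: (cvgr_to_le cqr).
  near=> h.
  have h0 : 0 < h by near: h; exact: nbhs_right_gt.
  have h1 : h < 1 by near: h; exact: nbhs_right_lt ltr01.
  have := cf b w h (ltW h0) (ltW h1).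
  have -> : (1 - h) *: b + h *: w = h *: v + b.
    by apply/rowP => i; rewrite /v !mxE; ring.
  move=> H.
  have E2 : (f \o shift b) (h *: v) = f (h *: v + b).
    by rewrite /= /shift /=; congr f; first [reflexivity | rewrite addrC; reflexivity].
  rewrite /q E2 -[_ *: _]/(_ * _) ler_pdivrMl //; lra.
rewrite deriveE // dG => H; lra.
Unshelve. all: by end_near.
Qed.

Lemma dotv_subsq {R : realType} {n : nat} (u w : 'rV[R]_n) :
  dotv (u - w) (u - w) = dotv u u - 2 * dotv u w + dotv w w.
Proof. dotv_tac. Qed.

Lemma dotv_subZsq {R : realType} {n : nat} (u g : 'rV[R]_n) (k : R) :
  dotv (u - k *: g) (u - k *: g) = dotv u u - 2 * k * dotv g u + k ^+ 2 * dotv g g.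
Proof. dotv_tac. Qed.

Lemma Qineq {R : realType} {n : nat} (f : 'rV[R]_n -> R) (G : 'rV[R]_n -> 'rV[R]_n) (L : R) (a b : 'rV[R]_n) :
  convex_fun f -> (forall z, differentiable f z) -> (forall z u, 'd f z u = dotv (G z) u) -> 0 < L ->
  (forall u v : 'rV[R]_n, enorm (G u - G v) <= L * enorm (u - v)) ->
  f a - f b <= dotv (G a) (a - b) - dotv (G a - G b) (G a - G b) / (2 * L).
Proof.
move=> cf df dG L0 Lip.
set d := G b - G a.
set w := b - L^-1 *: d.
have h1 := convex_grad f G a w cf df dG.
have h2 := descent f G L b w df dG L0 Lip.
have e1 : w - a = (b - a) - L^-1 *: d by apply/rowP => i; rewrite !mxE; ring.
have e2 : w - b = - (L^-1 *: d) by apply/rowP => i; rewrite !mxE; ring.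
have e3 : a - b = - (b - a) by rewrite opprB.
have e4 : G a - G b = - d by rewrite opprB.
have e5 : dotv d d = dotv (G b) d - dotv (G a) d by rewrite {1}/d dotvDl dotvNl.
rewrite e1 dotvDr dotvNr dotvZr in h1.
rewrite e2 dotvNr dotvNl dotvNr opprK !dotvZr dotvZl in h2.
rewrite e3 e4 dotvNr dotvNl dotvNr opprK.
move: h1 h2 e5; rewrite -/d.
move: (dotv (G a) (b - a)) (dotv (G a) d) (dotv (G b) d) (dotv d d) (f a) (f b) (f w) => A1 A2 A3 A4 fa fb fw.
move=> h1 h2 e5; rewrite e5 in h2 *.
have e : L / 2 * (L^-1 * (L^-1 * (A3 - A2))) = (A3 - A2) / (2 * L).
  by field; exact: lt0r_neq0.
have e' : - A1 - (A3 - A2) / (2 * L) = - A1 + L^-1 * A2 - L^-1 * A3 + (A3 - A2) / (2 * L).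
  by field; exact: lt0r_neq0.
rewrite e in h2; rewrite e'; lra.
Qed.

Lemma Dsc {R : realType} {n : nat} (f : 'rV[R]_n -> R) (G : 'rV[R]_n -> 'rV[R]_n) (L : R) (a : 'rV[R]_n) :
  (forall z, differentiable f z) -> (forall z u, 'd f z u = dotv (G z) u) -> 0 < L ->
  (forall u v : 'rV[R]_n, enorm (G u - G v) <= L * enorm (u - v)) ->
  f (a - L^-1 *: G a) <= f a - dotv (G a) (G a) / (2 * L).
Proof.
move=> df dG L0 Lip.
have h := descent f G L a (a - L^-1 *: G a) df dG L0 Lip.
have e : a - L^-1 *: G a - a = - (L^-1 *: G a) by apply/rowP => i; rewrite !mxE; ring.
rewrite e dotvNr dotvNl dotvNr opprK !dotvZr dotvZl in h.
move: h; move: (dotv (G a) (G a)) (f a) (f (a - L^-1 *: G a)) => A fa fw h.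
have e' : fa - L^-1 * A + L / 2 * (L^-1 * (L^-1 * A)) = fa - A / (2 * L).
  by field; exact: lt0r_neq0.
by rewrite -e'.
Qed.
Lemma step_scalar {R : realType} (L c f1 f0 fs A B C G1 G0 N1 N2 P : R) :
  0 < L -> 0 <= c ->
  N2 = N1 - 4 * ((c + 3) / 2) / L * P + 4 * ((c + 3) / 2) ^+ 2 / L ^+ 2 * G1 ->
  P = A + ((c + 3) / 2 - 1) * (B + C / L) ->
  f1 - fs <= A - G1 / (2 * L) ->
  f1 - f0 <= B - (G1 - 2 * C + G0) / (2 * L) ->
  G0 / (2 * L) <= f0 - fs ->
  2 * ((c + 3) / 2) ^+ 2 * (f1 - fs - G1 / (2 * L)) + L / 2 * N2 <=
  2 * ((c + 2) / 2) ^+ 2 * (f0 - fs - G0 / (2 * L)) + L / 2 * N1.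
Proof.
move=> L0 c0 -> -> h1 h2 h3.
set s1 := A - G1 / (2 * L) - (f1 - fs).
set s2 := B - (G1 - 2 * C + G0) / (2 * L) - (f1 - f0).
set s3 := f0 - fs - G0 / (2 * L).
have e : 2 * ((c + 2) / 2) ^+ 2 * (f0 - fs - G0 / (2 * L)) + L / 2 * N1 -
  (2 * ((c + 3) / 2) ^+ 2 * (f1 - fs - G1 / (2 * L)) + L / 2 *
   (N1 - 4 * ((c + 3) / 2) / L * (A + ((c + 3) / 2 - 1) * (B + C / L)) + 4 * ((c + 3) / 2) ^+ 2 / L ^+ 2 * G1))
  = (c + 3) * s1 + (c + 3) * (c + 1) / 2 * s2 + 1 / 2 * s3.
  rewrite /s1 /s2 /s3; field; exact: lt0r_neq0.
rewrite -subr_ge0 e.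
have hs1 : 0 <= s1 by rewrite /s1; lra.
have hs2 : 0 <= s2 by rewrite /s2; lra.
have hs3 : 0 <= s3 by rewrite /s3; lra.
have : 0 <= (c + 3) * s1 by apply: mulr_ge0 => //; lra.
have : 0 <= (c + 3) * (c + 1) / 2 * s2 by apply: mulr_ge0 => //; apply: mulr_ge0; [apply: mulr_ge0|]; lra.
lra.
Qed.

Lemma base_scalar {R : realType} (L th0 f0 fs D NG R0 Nz : R) :
  0 < L -> th0 = 1 ->
  Nz = R0 - 2 * (2 * th0 / L) * D + (2 * th0 / L) ^+ 2 * NG ->
  f0 - fs <= D - NG / (2 * L) ->
  2 * th0 ^+ 2 * (f0 - fs - NG / (2 * L)) + L / 2 * Nz <= L / 2 * R0.
Proof.
move=> L0 -> -> h.
have e : L / 2 * R0 - (2 * 1 ^+ 2 * (f0 - fs - NG / (2 * L)) + L / 2 * (R0 - 2 * (2 * 1 / L) * D + (2 * 1 / L) ^+ 2 * NG))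
  = 2 * (D - NG / (2 * L) - (f0 - fs)).
  by field; exact: lt0r_neq0.
rewrite -subr_ge0 e; lra.
Qed.

Lemma final_scalar {R : realType} (L c e fy fs R0 Nz : R) :
  0 < L -> 0 <= c -> 0 <= Nz ->
  2 * ((c + 2) / 2) ^+ 2 * e + L / 2 * Nz <= L / 2 * R0 ->
  fy - fs <= e ->
  fy - fs <= L * R0 / (c + 1 + 1) ^+ 2.
Proof.
move=> L0 c0 N0 h1 h2.
have cp : 0 < (c + 1 + 1) ^+ 2 by apply: exprn_gt0; lra.
rewrite ler_pdivlMr //.
have e1 : 2 * ((c + 2) / 2) ^+ 2 * e = e * (c + 1 + 1) ^+ 2 / 2 by field.
have e2 : L / 2 * R0 = L * R0 / 2 by field.
rewrite e1 e2 in h1.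
have h3 : 0 <= L / 2 * Nz by apply: mulr_ge0 => //; apply: divr_ge0; lra.
have h4 : (fy - fs) * (c + 1 + 1) ^+ 2 <= e * (c + 1 + 1) ^+ 2 by apply: ler_wpM2r => //; exact: ltW.
lra.
Qed.

Theorem corollary2 (R : realType) (n : nat) (f : 'rV[R]_n -> R) (L : R)
  (xs : 'rV[R]_n) (x y : nat -> 'rV[R]_n) :
  convex_fun f ->
  (forall z : 'rV[R]_n, differentiable f z) ->
  0 < L ->
  (forall u v : 'rV[R]_n,
      enorm (gradient f u - gradient f v) <= L * enorm (u - v)) ->
  (forall z : 'rV[R]_n, f xs <= f z) ->
  y 0%N = x 0%N ->
  (forall k : nat, y k.+1 = x k - L^-1 *: gradient f (x k)) ->
  (forall k : nat, x k.+1 = y k.+1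
      + (k%:R / (k%:R + 3)) *: (y k.+1 - y k)
      + ((k%:R + 2) / (k%:R + 3)) *: (y k.+1 - x k)) ->
  forall k : nat, (1 <= k)%N ->
    f (y k) - f xs <= L * enorm (x 0%N - xs) ^+ 2 / (k%:R + 1) ^+ 2.
Proof.
move=> cf df L0 Lip hmin y0 hy hx k k1.
have dG : forall z u, 'd f z u = dotv (gradient f z) u by move=> z u; exact: diff_dotv.
move: dG Lip hy hx; move: (gradient f) => G dG Lip hy hx.
have L0' : L != 0 by exact: lt0r_neq0.
have Q := fun a b => Qineq f G L a b cf df dG L0 Lip.
have D := fun a => Dsc f G L a df dG L0 Lip.
have Gs0 : G xs = 0.
  apply: dotvv_eq0; have := D xs; have := hmin (xs - L^-1 *: G xs).
  have := dotvv_ge0 (G xs) => h0 h1 h2.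
  have : dotv (G xs) (G xs) / (2 * L) <= 0 by lra.
  rewrite pmulr_lle0 ?invr_gt0 ?mulr_gt0 // => h3; by apply/eqP; rewrite eq_le h3 h0.
have lowb : forall a, dotv (G a) (G a) / (2 * L) <= f a - f xs.
  by move=> a; have := D a; have := hmin (a - L^-1 *: G a); lra.
pose th := fun j : nat => (j%:R + 2) / 2 : R.
pose z := fun j => th j *: x j - (th j - 1) *: y j.
pose N := fun u : 'rV[R]_n => dotv u u.
pose Phi := fun j => 2 * th j ^+ 2 * (f (x j) - f xs - N (G (x j)) / (2 * L)) + L / 2 * N (z j.+1 - xs).
have zrec : forall j, z j.+1 = z j - (2 * th j / L) *: G (x j).
  move=> j; rewrite /z (hx j) (hy j) /th -(natr1 j).
  have c0 : 0 <= j%:R :> R by exact: ler0n.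
  apply/rowP => i; rewrite !mxE.
  by field; rewrite L0' /=; apply: lt0r_neq0; lra.
have step : forall j, Phi j.+1 <= Phi j.
  move=> j; set c := (j%:R : R).
  have c0 : 0 <= c by exact: ler0n.
  have thS : th j.+1 = (c + 3) / 2 by rewrite /th -(natr1 j) -/c; field.
  have q1 : f (x j.+1) - f xs <= dotv (G (x j.+1)) (x j.+1 - xs) - N (G (x j.+1)) / (2 * L).
    by have := Q (x j.+1) xs; rewrite Gs0 subr0.
  have q2 : f (x j.+1) - f (x j) <= dotv (G (x j.+1)) (x j.+1 - x j) -
      (N (G (x j.+1)) - 2 * dotv (G (x j.+1)) (G (x j)) + N (G (x j))) / (2 * L).
    by have := Q (x j.+1) (x j); rewrite dotv_subsq.
  have q3 : N (G (x j)) / (2 * L) <= f (x j) - f xs := lowb (x j).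
  have eN : N (z j.+2 - xs) = N (z j.+1 - xs) - 4 * ((c + 3) / 2) / L * dotv (G (x j.+1)) (z j.+1 - xs)
      + 4 * ((c + 3) / 2) ^+ 2 / L ^+ 2 * N (G (x j.+1)).
    rewrite zrec thS.
    have -> : z j.+1 - (2 * ((c + 3) / 2) / L) *: G (x j.+1) - xs
        = (z j.+1 - xs) - (2 * ((c + 3) / 2) / L) *: G (x j.+1) by rewrite addrAC.
    rewrite /N dotv_subZsq.
    move: (dotv (z j.+1 - xs) (z j.+1 - xs)) (dotv (G (x j.+1)) (z j.+1 - xs)) (dotv (G (x j.+1)) (G (x j.+1))) => p q r.
    by field.
  have eP : dotv (G (x j.+1)) (z j.+1 - xs) = dotv (G (x j.+1)) (x j.+1 - xs) +
      ((c + 3) / 2 - 1) * (dotv (G (x j.+1)) (x j.+1 - x j) + dotv (G (x j.+1)) (G (x j)) / L).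
    have -> : z j.+1 - xs = (x j.+1 - xs) + ((c + 3) / 2 - 1) *: ((x j.+1 - x j) + L^-1 *: G (x j)).
      rewrite /z thS (hy j); apply/rowP => i; rewrite !mxE; ring.
    rewrite (dotvDr (x j.+1 - xs)) dotvZr (dotvDr (x j.+1 - x j)) dotvZr.
    move: (dotv (G (x j.+1)) (x j.+1 - xs)) (dotv (G (x j.+1)) (x j.+1 - x j)) (dotv (G (x j.+1)) (G (x j))) => p q r.
    by field.
  rewrite /Phi thS.
  exact: (step_scalar _ _ _ _ _ _ _ _ _ _ _ _ _ L0 c0 eN eP q1 q2 q3).
have base : Phi 0%N <= L / 2 * N (x 0%N - xs).
  have z0 : z 0%N = x 0%N.
    by rewrite /z y0 /th; apply/rowP => i; rewrite !mxE mulr0n add0r divff ?pnatr_eq0 // subrr mul0r mul1r subr0.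
  have th0 : th 0%N = 1 by rewrite /th mulr0n add0r divff // pnatr_eq0.
  have q0 : f (x 0%N) - f xs <= dotv (G (x 0%N)) (x 0%N - xs) - N (G (x 0%N)) / (2 * L).
    by have := Q (x 0%N) xs; rewrite Gs0 subr0.
  have eN0 : N (z 1%N - xs) = N (x 0%N - xs) - 2 * (2 * th 0%N / L) * dotv (G (x 0%N)) (x 0%N - xs)
      + (2 * th 0%N / L) ^+ 2 * N (G (x 0%N)).
    by rewrite zrec z0 addrAC /N dotv_subZsq.
  exact: (base_scalar _ _ _ _ _ _ _ _ L0 th0 eN0 q0).
have mono : forall j, Phi j <= L / 2 * N (x 0%N - xs).
  by elim => [|j IH]; [exact: base | exact: le_trans (step j) IH].
case: k k1 => // m _.
have hfy : f (y m.+1) - f xs <= f (x m) - f xs - N (G (x m)) / (2 * L).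
  by rewrite (hy m); have := D (x m); rewrite /N; lra.
rewrite -(natr1 m) enorm_sq.
apply: (final_scalar _ _ _ _ _ _ _ L0 (ler0n _ m) (dotvv_ge0 _) (mono m) hfy).
Qed.
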